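(* Let $E$ be a finite set, $V \subset \mathbb R^E$ a linear subspace with oriented matroid $M$, and $Y_V$ its matroid Schubert variety. If $F \subset G \subset E$ are flats of $M$, then \[ Y_V \cap (0^F \times \mathbb R_{>0}^{G\setminus F} \times \infty^{E \setminus G}) = \big(\pi_G(V) \cap (0^F \times \mathbb R_{>0}^{G\setminus F})\big) \times \infty^{E \setminus G}. \] In particular, $Y_V \cap (0^F \times \mathbb R_{>0}^{G \setminus F} \times \infty^{E \setminus G})$ is nonempty if and only if $F$ is an acyclic flat of $M|_G$.
   Context: $\mathbb P^1_{\mathbb R} = \mathbb R \cup\{\infty\}$; $Y_V$ is the Zariski closure of $V$ in $(\mathbb P^1_{\mathbb R})^E$. Notation $0^A \times S^B \times \infty^C$ (for a partition $E = A\sqcup B\sqcup C$) means points whose coordinates are $0$ on $A$, in $S$ on $B$, and $\infty$ on $C$; similarly in $\mathbb R^G$. $\pi_G:\mathbb R^E \to \mathbb R^G$ is the coordinate projection. The oriented matroid $M$ of $V$ has covectors the sign vectors $s(v)\in\{-,0,+\}^E$ of $v \in V$; flats are zero sets of covectors. $M|_G$ is the oriented matroid on $G$ with covectors the restrictions to $G$ of covectors of $M$ (equivalently the oriented matroid of $\pi_G(V)$). $F$ is an acyclic flat of $M|_G$ if the sign vector that is $0$ on $F$ and $+$ on $G\setminus F$ is a covector of $M|_G$. *)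

(* Defs.v *)
From HB Require Import structures.
From mathcomp Require Import all_boot all_order all_algebra.
From mathcomp Require Import reals.
From mathcomp Require Import mpoly.

Set Implicit Arguments.
Unset Strict Implicit.
Unset Printing Implicit Defensive.

Import Order.TTheory GRing.Theory Num.Theory.
Local Open Scope ring_scope.

(* The ground set E is modelled as 'I_n.  Vectors of R^E are row vectors 'rV[R]_n,
   and V is a linear subspace {vspace 'rV[R]_n}. *)

(* Points of P^1_R = R \cup {oo}: [Some a] is a in R, [None] is oo. *)
Definition P1 (R : Type) := option R.

Definition P1pt (R : Type) (n : nat) := 'I_n -> P1 R.

Definition embR (R : Type) (n : nat) (v : 'rV[R]_n) : P1pt R n :=
  fun i => Some (v ord0 i).

(* Multihomogeneous coordinates on (P^1)^E: variables 'X_(lshift n i) = x_i and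
   'X_(rshift n i) = y_i; the point a in R has coordinates (a : 1), oo has (1 : 0). *)
Definition hcoords (R : nzRingType) (n : nat) (p : P1pt R n) : 'I_(n + n) -> R :=
  fun k => match split k with
           | inl i => match p i with Some a => a | None => 1 end
           | inr i => match p i with Some _ => 1 | None => 0 end
           end.

Definition multihomog (R : nzRingType) (n : nat) (f : {mpoly R[n + n]}) : Prop :=
  exists d : 'I_n -> nat,
    forall m, m \in msupp f -> forall i, (m (lshift n i) + m (rshift n i))%N = d i.

(* Vanishing of a multihomogeneous polynomial at a point of (P^1)^E
   (well defined, independent of the chosen homogeneous coordinates). *)
Definition vanishes_at (R : nzRingType) (n : nat) (f : {mpoly R[n + n]}) (p : P1pt R n) : Prop :=
  f.@[hcoords p] = 0.

Definition zariski_closure (R : nzRingType) (n : nat) (S : P1pt R n -> Prop) : P1pt R n -> Prop :=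
  fun p => forall f : {mpoly R[n + n]}, multihomog f ->
             (forall q, S q -> vanishes_at f q) -> vanishes_at f p.

Definition schubert_variety (R : realType) (n : nat) (V : {vspace 'rV[R]_n}) : P1pt R n -> Prop :=
  zariski_closure (fun q => exists2 v, v \in V & q = embR v).

Inductive sign := SNeg | SZero | SPos.

Definition sgn (R : realType) (a : R) : sign :=
  if a == 0 then SZero else if 0 < a then SPos else SNeg.

Definition signvec (R : realType) (n : nat) (v : 'rV[R]_n) : 'I_n -> sign :=
  fun i => sgn (v ord0 i).

Definition covector (R : realType) (n : nat) (V : {vspace 'rV[R]_n}) (s : 'I_n -> sign) : Prop :=
  exists2 v, v \in V & forall i, s i = signvec v i.

Definition flat (R : realType) (n : nat) (V : {vspace 'rV[R]_n}) (F : {set 'I_n}) : Prop :=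
  exists s, covector V s /\ forall i, (i \in F) <-> s i = SZero.

(* covectors of the restriction M|_G: restrictions to G of covectors of M
   (a sign vector on G is represented by a function on E, only its values on G matter) *)
Definition covector_restr (R : realType) (n : nat) (V : {vspace 'rV[R]_n}) (G : {set 'I_n})
    (s : 'I_n -> sign) : Prop :=
  exists t, covector V t /\ forall i, i \in G -> s i = t i.

Definition acyclic_flat_restr (R : realType) (n : nat) (V : {vspace 'rV[R]_n}) (G F : {set 'I_n}) : Prop :=
  covector_restr V G (fun i => if i \in F then SZero else SPos).

Definition cell (R : realType) (n : nat) (F G : {set 'I_n}) (p : P1pt R n) : Prop :=
  forall i,
    (i \in F -> p i = Some 0) /\
    (i \in G :\: F -> exists2 a : R, 0 < a & p i = Some a) /\
    (i \notin G -> p i = None).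

Definition coordproj (R : Type) (n : nat) (G : {set 'I_n}) (v : 'rV[R]_n) : {x | x \in G} -> R :=
  fun x => v ord0 (sval x).
Arguments coordproj {R n} G v.

Definition proj_cell (R : realType) (n : nat) (V : {vspace 'rV[R]_n}) (F G : {set 'I_n})
    (p : P1pt R n) : Prop :=
  exists w : {x | x \in G} -> R,
    (exists2 v, v \in V & w = coordproj G v) /\
    (forall x : {x | x \in G}, sval x \in F -> w x = 0) /\
    (forall x : {x | x \in G}, sval x \notin F -> 0 < w x) /\
    (forall x : {x | x \in G}, p (sval x) = Some (w x)) /\
    (forall i, i \notin G -> p i = None).

(* Main.v *)
Require Import Defs.
From HB Require Import structures.
From mathcomp Require Import all_boot all_order all_algebra.
From mathcomp Require Import reals.
From mathcomp Require Import mpoly.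
Set Implicit Arguments.
Unset Strict Implicit.
Unset Printing Implicit Defensive.
Import Order.TTheory GRing.Theory Num.Theory.
Local Open Scope ring_scope.

Section H.
Variable R : realType.
Variable n : nat.

Definition pidx (k : 'I_(n + n)) : 'I_n :=
  match split k with inl i => i | inr i => i end.

Lemma scale_eval (f : {mpoly R[n + n]}) (d : 'I_n -> nat)
  (Hd : forall m, m \in msupp f -> forall i, (m (lshift n i) + m (rshift n i))%N = d i)
  (z : 'I_(n + n) -> R) (c : 'I_n -> R) :
  f.@[fun k => c (pidx k) * z k] = (\prod_i c i ^+ d i) * f.@[z].
Proof.
rewrite !mevalE mulr_sumr; apply: eq_big_seq => m Hm.
rewrite mulrCA; congr (_ * _).
under eq_bigr do rewrite exprMn.
rewrite big_split /=; congr (_ * _).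
rewrite big_split_ord /= -big_split /=; apply: eq_bigr => i _.
rewrite /pidx.
have -> : split (lshift n i) = inl i by exact: (unsplitK (inl _ i)).
have -> : split (rshift n i) = inr i by exact: (unsplitK (inr _ i)).
by rewrite -exprD Hd.
Qed.

Lemma poly_zero (P : {poly R}) : (forall s, s != 0 -> P.[s] = 0) -> P = 0.
Proof.
move=> HP; apply/eqP; apply: contraT => nz.
have := max_poly_roots nz (rs := [seq (i.+1)%:R | i <- iota 0 (size P)]).
rewrite size_map size_iota ltnn; apply.
  by apply/allP => x /mapP [i _ ->]; rewrite /root HP // pnatr_eq0.
by rewrite map_inj_uniq ?iota_uniq // => i j /eqP; rewrite eqr_nat eqSS => /eqP.
Qed.


Lemma sgn_zero (a : R) : sgn a = SZero <-> a = 0.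
Proof. rewrite /sgn; case: eqP => [-> //| a0]; by case: ifP => _; split => // h; case: a0. Qed.

Lemma sgn_pos (a : R) : sgn a = SPos -> 0 < a.
Proof. rewrite /sgn; case: eqP => // _; by case: ifP. Qed.

Lemma closure_pt (V : {vspace 'rV[R]_n}) (G : {set 'I_n}) (u v : 'rV[R]_n)
  (uV : u \in V) (vV : v \in V) (Hu : forall i, i \in G <-> u ord0 i = 0)
  (p : P1pt R n) (HpG : forall i, i \in G -> p i = Some (v ord0 i))
  (HpN : forall i, i \notin G -> p i = None) :
  schubert_variety V p.
Proof.
move=> f [d Hd] Hvan.
pose H : 'I_(n + n) -> {poly R} := fun k =>
  match split k with
  | inl i => if i \in G then (v ord0 i)%:P else (u ord0 i)%:P + (v ord0 i)%:P * 'X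
  | inr i => if i \in G then 1 else 'X end.
pose P := \sum_(m <- msupp f) (f@_m)%:P * \prod_k H k ^+ m k.
have HP s : P.[s] = f.@[fun k => (H k).[s]].
  rewrite mevalE horner_sum; apply: eq_bigr => m _.
  rewrite hornerCM horner_prod; congr (_ * _); apply: eq_bigr => k _.
  by rewrite horner_exp.
have P0 : P = 0.
  apply: poly_zero => s s0; rewrite HP.
  pose c : 'I_n -> R := fun i => if i \in G then 1 else s.
  rewrite (@meval_eq _ _ _ (fun k => c (pidx k) * hcoords (embR (v + s^-1 *: u)) k)).
    rewrite (scale_eval Hd) (Hvan (embR (v + s^-1 *: u))) ?mulr0 //.
    by exists (v + s^-1 *: u) => //; rewrite memvD // memvZ.
  move=> k; rewrite /H /c /pidx /hcoords /embR.
  case: (split k) => i; case: ifP => iG; rewrite ?hornerE ?mxE.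
  - by move/Hu: iG => ->; rewrite mulr0 addr0.
  - by rewrite mulrDr mulrA mulfV // mul1r [RHS]addrC [s * _]mulrC.
  - by [].
  - by [].
have := HP 0; rewrite P0 horner0 => /esym.
pose c : 'I_n -> R := fun i => if i \in G then 1 else u ord0 i.
rewrite (@meval_eq _ _ _ (fun k => c (pidx k) * hcoords p k)).
  rewrite (scale_eval Hd) => /eqP; rewrite mulf_eq0 => /orP [|/eqP //].
  rewrite prodf_seq_eq0 => /hasP [i _ /=]; rewrite expf_eq0 /c => /andP [_].
  case: ifP => iG; first by rewrite oner_eq0.
  by move/eqP/Hu; rewrite iG.
move=> k; rewrite /H /c /pidx /hcoords.
case: (split k) => i; case: (boolP (i \in G)) => iG; rewrite ?hornerE.
- by rewrite HpG // mul1r.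
- by rewrite HpN // mulr1.
- by rewrite HpG // mul1r.
- by rewrite HpN // mulr0.
Qed.


Lemma split_l (l : 'I_n) : split (lshift n l) = inl l.
Proof. exact: (unsplitK (inl _ l)). Qed.
Lemma split_r (l : 'I_n) : split (rshift n l) = inr l.
Proof. exact: (unsplitK (inr _ l)). Qed.

Lemma proj_pt (V : {vspace 'rV[R]_n}) (G : {set 'I_n}) (p : P1pt R n)
  (HY : schubert_variety V p) (a : 'I_n -> R)
  (Hp : forall i, i \in G -> p i = Some (a i)) :
  exists2 v, v \in V & forall i, i \in G -> a i = v ord0 i.
Proof.
pose z : 'rV[R]_n := \row_i (if i \in G then a i else 0).
pose D : 'M[R]_n := diag_mx (\row_j ((j \in G)%:R)).
pose W := (linfun (mulmxr D) @: V)%VS.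
have HD x i : (x *m D) ord0 i = x ord0 i * (i \in G)%:R by rewrite mul_mx_diag !mxE.
case: (boolP (z \in W)) => [/memv_imgP [v vV Hz] | zW].
  exists v => // i iG; have := congr1 (fun M : 'rV[R]_n => M ord0 i) Hz.
  by rewrite lfunE /= HD !mxE iG mulr1.
pose e := z - projv W z.
have enz : e != 0.
  by apply: contra zW; rewrite subr_eq0 => /eqP ->; exact: memv_proj.
have [j ej] : exists j, e ord0 j != 0.
  case: (pickP (fun j => e ord0 j != 0)) => [j ej | H0]; first by exists j.
  case/eqP: enz.
  apply/matrixP => i k; rewrite (ord1 i) [RHS]mxE; apply/eqP/negbFE; exact: H0 k.
pose phi (x : 'rV[R]_n) := (x - projv W x) ord0 j.
pose c i := phi (delta_mx ord0 i).
have Hphi x : phi x = \sum_i x ord0 i * c i.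
  rewrite /phi /c {1 2}(row_sum_delta x) linear_sum /= -sumrB summxE.
  apply: eq_bigr => i _.
  by rewrite linearZ /= -scalerBr mxE.
have phiW w : w \in W -> phi w = 0 by move=> wW; rewrite /phi projv_id // subrr mxE.
pose mon i : 'X_{1..n + n} := [multinom (match split k with
   | inl l => (l == i : nat) | inr l => ((l \in G) && (l != i) : nat) end) | k < n + n].
pose f : {mpoly R[n + n]} := \sum_(i in G) c i *: 'X_[mon i].
have Heval hc : (forall l, l \in G -> hc (rshift n l) = 1) ->
    f.@[hc] = \sum_(i in G) c i * hc (lshift n i).
  move=> H1; rewrite /f (big_morph _ (mevalD hc) (meval0 hc)); apply: eq_bigr => i iG.
  rewrite mevalZ mevalX; congr (_ * _).
  rewrite big_split_ord /=.
  rewrite (bigD1 i) //= mnmE split_l eqxx expr1 big1 ?mulr1; last first.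
    by move=> l /negbTE li; rewrite mnmE split_l li expr0.
  rewrite big1 ?mulr1 // => l _; rewrite mnmE split_r.
  by case: (boolP (l \in G)) => lG /=; [rewrite H1 // expr1n | rewrite expr0].
have fmh : multihomog f.
  exists (fun l => (l \in G : nat)) => m; rewrite mcoeff_msupp => mf l.
  have [i iG mi] : exists2 i, i \in G & mon i = m.
    case: (pickP (fun i => (i \in G) && (mon i == m))) => [i /andP[iG /eqP mi] | Hn].
      by exists i.
    move: mf; rewrite /f (big_morph _ (mcoeffD m) (mcoeff0 _ m)) big1 ?eqxx // => i iG.
    by rewrite mcoeffZ mcoeffX; move: (Hn i); rewrite iG /= => ->; rewrite mulr0.
  rewrite -mi !mnmE split_l split_r.
  by case: (eqVneq l i) => [->|li] /=; rewrite ?iG ?eqxx ?andbT //.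
have := HY f fmh.
have H1 : forall q, (exists2 v, v \in V & q = embR v) -> vanishes_at f q.
  move=> q [v vV ->]; rewrite /vanishes_at Heval; last first.
    by move=> l _; rewrite /hcoords split_r.
  have := phiW _ (memv_img (linfun (mulmxr D)) vV); rewrite lfunE /= Hphi => H0.
  transitivity (\sum_i (v *m D) ord0 i * c i); last exact: H0.
  rewrite big_mkcond /=; apply: eq_bigr => i _.
  by rewrite HD /hcoords split_l /embR; case: ifP => _; rewrite ?mulr1 ?mulr0 ?mul0r // mulrC.
move/(_ H1); rewrite /vanishes_at Heval; last first.
  by move=> l lG; rewrite /hcoords split_r Hp.
have : phi z = e ord0 j by [].
rewrite Hphi => Hz.
rewrite (_ : \sum_(i in G) _ = e ord0 j).
  by move=> /eqP; rewrite (negbTE ej).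
rewrite -Hz big_mkcond /=; apply: eq_bigr => i _.
rewrite /hcoords !mxE; case: (boolP (i \in G)) => iG; last by rewrite mul0r.
by rewrite split_l Hp // mulrC.
Qed.

End H.

Theorem lemma3p1 (R : realType) (n : nat) (V : {vspace 'rV[R]_n}) (F G : {set 'I_n}) :
  flat V F -> flat V G -> F \subset G ->
  (forall p : P1pt R n, schubert_variety V p /\ cell F G p <-> proj_cell V F G p) /\
  ((exists p : P1pt R n, schubert_variety V p /\ cell F G p) <-> acyclic_flat_restr V G F).
Proof.
move=> _ [s [[u uV Hs] HsG]] FG.
have Hu i : i \in G <-> u ord0 i = 0.
  split=> h.
    by move/HsG: h; rewrite Hs => /sgn_zero.
  by apply/HsG; rewrite Hs; exact/sgn_zero.
have part1 : forall p, schubert_variety V p /\ cell F G p <-> proj_cell V F G p.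
  move=> p; split.
  - case=> HY Hc.
    have Hsome i : i \in G -> exists a, p i = Some a.
      move=> iG; case: (boolP (i \in F)) => iF.
        by exists 0; case: (Hc i) => /(_ iF).
      have iGF : i \in G :\: F by rewrite inE iF iG.
      case: (Hc i) => _ [/(_ iGF) [a _ ->] _]; by exists a.
    pose a i := if p i is Some x then x else 0.
    have Hp i : i \in G -> p i = Some (a i).
      by move=> /Hsome [x Hx]; rewrite /a Hx.
    have [v vV Hv] := proj_pt HY Hp.
    exists (coordproj G v); split; first by exists v.
    split.
      move=> [x xG] /= xF; rewrite /coordproj /= -Hv //.
      by case: (Hc x) => /(_ xF); rewrite Hp // => [[]].
    split.
      move=> [x xG] /= xF; rewrite /coordproj /= -Hv //.
      have xGF : x \in G :\: F by rewrite inE xF xG.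
      by case: (Hc x) => _ [/(_ xGF) [b b0]]; rewrite Hp // => [[->]].
    split.
      by move=> [x xG] /=; rewrite /coordproj /= -Hv // Hp.
    by move=> i iG; case: (Hc i) => _ [_ /(_ iG)].
  - case=> w [[v vV ->] [HF [HnF [Hpw HpN]]]].
    have HpG i (iG : i \in G) : p i = Some (v ord0 i) := Hpw (exist _ i iG).
    split; first exact: (closure_pt uV vV Hu HpG HpN).
    move=> i; split; [|split].
    + move=> iF; have iG := subsetP FG _ iF; rewrite HpG //.
      by have := HF (exist _ i iG) iF; rewrite /coordproj /= => ->.
    + rewrite inE => /andP [iF iG]; exists (v ord0 i).
        exact: (HnF (exist _ i iG) iF).
      exact: HpG.
    + exact: HpN.
split; first exact: part1.
split.
- case=> p /part1 [w [[v vV Hw] [HF [HnF _]]]].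
  exists (signvec v); split; first by exists v.
  move=> i iG; rewrite /signvec /sgn.
  have := HF (exist _ i iG); have := HnF (exist _ i iG).
  rewrite Hw /coordproj /=; case: ifP => iF.
    by move=> _ /(_ isT) ->; rewrite eqxx.
  by move=> /(_ isT) vpos _; rewrite gt_eqF // vpos.
- case=> t [[v vV Ht] Hti].
  exists (fun i => if i \in G then Some (v ord0 i) else None); apply/part1.
  exists (coordproj G v); split; first by exists v.
  split.
    move=> [x xG] /= xF; rewrite /coordproj /=; apply/sgn_zero.
    by move: (Hti x xG); rewrite xF Ht /signvec => <-.
  split.
    move=> [x xG] /= xF; rewrite /coordproj /=; apply/sgn_pos.
    by move: (Hti x xG); rewrite (negbTE xF) Ht /signvec => <-.
  split.
    by move=> [x xG] /=; rewrite xG.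
  by move=> i iN; rewrite (negbTE iN).
Qed.
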